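(* Let $p\in(0,1)$, $x\geq1$, and let $(\xi_n)_{n\geq1}$ be i.i.d. with $\mathbf{P}(\xi_1=1)=p=1-\mathbf{P}(\xi_1=-1)$. Set $W_0:=x$, $B_1:=1$, $W_n:=W_{n-1}+\xi_nB_n$, $B_{n+1}:=B_n2^{\xi_n}$ for $n\geq1$, and $Y_n:=W_n/B_{n+1}$ for $n\in\mathbb{N}$. Then almost surely on the event $\{Y_k\leq2\text{ for some }k\in\mathbb{N}\}$, there exists $n$ with $W_n\leq0$ (the gambler eventually goes bankrupt). *)

(* Defs.v *)
From HB Require Import structures.
From mathcomp Require Import all_boot all_order all_algebra.
From mathcomp Require Import all_classical all_reals all_analysis.
Set Implicit Arguments. Unset Strict Implicit. Unset Printing Implicit Defensive.
Import Order.TTheory GRing.Theory Num.Theory.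
Local Open Scope classical_set_scope.
Local Open Scope ring_scope.

Definition mutually_independent_RV {d} {T : measurableType d} {R : realType}
  (P : probability T R) (I : set nat) (X : nat -> {RV P >-> R}) : Prop :=
  forall (J : seq nat) (A : nat -> set R),
    uniq J -> {subset J <= I} ->
    (forall j, j \in J -> measurable (A j)) ->
    P (\bigcap_(j in [set j | j \in J]) (X j @^-1` A j)) =
    (\prod_(j <- J) P (X j @^-1` A j))%E.

(* Paper indexing: xi n for n >= 1 (xi 0 unused).
   Bs e n = B_{n+1}:  B_1 = 1,  B_{n+1} = B_n * 2^{xi_n}.            *)
Fixpoint Bs {R : realType} (e : nat -> R) (n : nat) : R :=
  match n with
  | 0 => 1
  | m.+1 => Bs e m * powR 2 (e m.+1)
  end.

Fixpoint Ws {R : realType} (x : R) (e : nat -> R) (n : nat) : R :=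
  match n with
  | 0 => x
  | m.+1 => Ws x e m + e m.+1 * Bs e m
  end.

Definition Ys {R : realType} (x : R) (e : nat -> R) (n : nat) : R :=
  Ws x e n / Bs e n.

Arguments mutually_independent_RV {d T R} P I X.

(* Main.v *)
Require Import Defs.
From HB Require Import structures.
From mathcomp Require Import all_boot all_order all_algebra.
From mathcomp Require Import all_classical all_reals all_analysis.
From mathcomp Require Import ring lra zify.
Import Order.TTheory GRing.Theory Num.Theory.
Local Open Scope classical_set_scope.
Local Open Scope ring_scope.

Section Det.
Variable R : realType.
Implicit Types (x : R) (e : nat -> R).

Lemma Bs_gt0 e n : 0 < Bs e n.
Proof. elim: n => [|n IH] /=; first exact: ltr01. by rewrite mulr_gt0 // powR_gt0. Qed.

Lemma Ys_win x e n : e n.+1 = 1 -> Ys x e n.+1 = (Ys x e n + 1) / 2.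
Proof.
move=> h; rewrite /Ys /= h powRr1 // mul1r.
have := Bs_gt0 e n; set b := Bs e n => hb.
field; by rewrite gt_eqF.
Qed.

Lemma Ys_lose x e n : e n.+1 = -1 -> Ys x e n.+1 = (Ys x e n - 1) * 2.
Proof.
move=> h; rewrite /Ys /= h powRN powRr1 //.
have := Bs_gt0 e n; set b := Bs e n => hb.
field; by rewrite gt_eqF.
Qed.

Lemma Ws_le0 x e n : Ys x e n <= 0 -> Ws x e n <= 0.
Proof.
rewrite /Ys => h. have hb := Bs_gt0 e n.
have -> : Ws x e n = Ws x e n / Bs e n * Bs e n by rewrite divfK // gt_eqF.
by rewrite pmulr_lle0.
Qed.

Lemma Ys_inv x e k : (forall n, e n.+1 = 1 \/ e n.+1 = -1) ->
  Ys x e k <= 2 -> forall n, (k <= n)%N -> Ys x e n <= 2.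
Proof.
move=> he hk n; elim: n => [|n IH].
  move=> h0; have k0 : k = 0%N by apply/eqP; rewrite -leqn0.
  by move: hk; rewrite k0.
rewrite leq_eqVlt => /orP [/eqP <- //|hn].
have {}IH := IH hn.
case: (he n) => h; [rewrite Ys_win // ler_pdivrMr //; lra | rewrite Ys_lose //; lra].
Qed.

Lemma pattern_bust x e m : Ys x e m <= 2 -> e m.+1 = 1 -> e m.+2 = -1 -> e m.+3 = -1 ->
  Ws x e m.+3 <= 0.
Proof.
move=> h0 h1 h2 h3; apply: Ws_le0.
rewrite Ys_lose // Ys_lose // Ys_win //.
have : (Ys x e m + 1) / 2 <= 3/2 by rewrite ler_pdivrMr // ; lra.
lra.
Qed.
End Det.
Section Prob.
Variables (d : measure_display) (T : measurableType d) (R : realType)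
  (P : probability T R) (p : R) (xi : nat -> {RV P >-> R}).
Hypothesis hind : mutually_independent_RV P [set n | (1 <= n)%N] xi.
Hypothesis h1 : forall n, (1 <= n)%N -> P (xi n @^-1` [set 1]) = p%:E.
Hypothesis hm1 : forall n, (1 <= n)%N -> P (xi n @^-1` [set -1]) = (1 - p)%:E.

Definition cyl (J : seq nat) (A : nat -> set R) : set T :=
  \bigcap_(j in [set j | j \in J]) (xi j @^-1` A j).

Definition G (m : nat) : set T :=
  xi m @^-1` [set 1] `&` xi m.+1 @^-1` [set -1] `&` xi m.+2 @^-1` [set -1].

Fixpoint E (m N : nat) : set T :=
  match N with 0 => setT | N'.+1 => ~` G m `&` E m.+3 N' end.

Lemma cyl_meas J A : (forall j, j \in J -> measurable (A j)) -> measurable (cyl J A).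
Proof.
move=> hA; apply: bigcap_measurableType => j /= hj.
by apply: measurable_funPTI; apply: hA.
Qed.

Lemma G_meas m : measurable (G m).
Proof. by apply: measurableI; [apply: measurableI|]; apply: measurable_funPTI. Qed.

Lemma E_meas m N : measurable (E m N).
Proof.
elim: N m => [|N IH] m /=; first exact: measurableT.
by apply: measurableI; [apply: measurableC; apply: G_meas | apply: IH].
Qed.

Definition Aext (A : nat -> set R) m j : set R :=
  if j == m then [set 1] else if j == m.+1 then [set -1]
  else if j == m.+2 then [set -1] else A j.

Lemma Aext_lt A m j : (j < m)%N -> Aext A m j = A j.
Proof.
move=> h; rewrite /Aext.
case: eqP => [?|_]; first lia.
case: eqP => [?|_]; first lia.
case: eqP => [?|_]; first lia.
done.
Qed.

Lemma cylG J A m : (forall j, j \in J -> (j < m)%N) ->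
  cyl J A `&` G m = cyl (J ++ [:: m; m.+1; m.+2]) (Aext A m).
Proof.
move=> hJ; apply/seteqP; split => w.
  move=> [hc [[g1 g2] g3]] j /=; rewrite mem_cat inE => /orP [hj|].
    by rewrite Aext_lt ?hJ //; exact: hc.
  rewrite !inE => /or3P [] /eqP -> /=; rewrite /Aext !eqxx.
  - exact: g1.
  - by case: eqP => [|_]; [lia|].
  - by case: eqP => [|_]; [lia|]; case: eqP => [|_]; [lia|].
move=> hc; split.
  move=> j /= hj; have := hc j; rewrite /= mem_cat hj /= Aext_lt ?hJ //; exact.
have := hc m; have := hc m.+1; have := hc m.+2.
rewrite /= !mem_cat !inE !eqxx !orbT /Aext !eqxx.
case: eqP => [|_]; [lia|]; case: eqP => [|_]; [lia|].
case: eqP => [|_]; [lia|].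
move=> a b c; split; [split|]; [exact: c | exact: b | exact: a].
Qed.
Lemma Pfin A : measurable A -> P A \is a fin_num.
Proof.
move=> mA; rewrite ge0_fin_numE ?measure_ge0 //.
exact: (le_lt_trans (probability_le1 _ mA) (ltry _)).
Qed.

Lemma Aext0 A m : Aext A m m = [set 1].
Proof. by rewrite /Aext eqxx. Qed.
Lemma Aext1 A m : Aext A m m.+1 = [set -1].
Proof. by rewrite /Aext eqxx; case: eqP => [|_]; [lia|]. Qed.
Lemma Aext2 A m : Aext A m m.+2 = [set -1].
Proof. by rewrite /Aext eqxx; case: eqP => [|_]; [lia|]; case: eqP => [|_]; [lia|]. Qed.

Definition q := p * (1 - p) ^+ 2.

Lemma Pcyl J A : uniq J -> (forall j, j \in J -> (1 <= j)%N) ->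
  (forall j, j \in J -> measurable (A j)) ->
  P (cyl J A) = (\prod_(j <- J) P (xi j @^-1` A j))%E.
Proof. by move=> u h hA; apply: hind => // j hj; apply/mem_set/h. Qed.

Lemma PcylG J A m : (1 <= m)%N -> uniq J ->
  (forall j, j \in J -> (1 <= j)%N && (j < m)%N) ->
  (forall j, j \in J -> measurable (A j)) ->
  P (cyl J A `&` G m) = (P (cyl J A) * q%:E)%E.
Proof.
move=> m1 u hJ hA.
have hJm : forall j, j \in J -> (j < m)%N by move=> j /hJ /andP [].
have hJ1 : forall j, j \in J -> (1 <= j)%N by move=> j /hJ /andP [].
rewrite cylG // Pcyl //; last first.
- move=> j; rewrite mem_cat => /orP [hj|].
    by rewrite Aext_lt ?hJm //; apply: hA.
  by rewrite !inE => /or3P [] /eqP ->; rewrite ?Aext0 ?Aext1 ?Aext2.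
- by move=> j; rewrite mem_cat => /orP [/hJ1 //|]; rewrite !inE => /or3P [] /eqP ->.
- rewrite cat_uniq u andTb; apply/andP; split.
    apply/hasPn => j /=; rewrite !inE => /or3P [] /eqP ->; apply/negP => /hJm; lia.
  rewrite /= !inE; lia.
rewrite big_cat /= !big_cons big_nil Aext0 Aext1 Aext2 Pcyl // ?h1 ?hm1 //; try lia.
rewrite (eq_big_seq (fun j => P (xi j @^-1` A j))); last first.
  by move=> j hj; rewrite Aext_lt ?hJm.
rewrite mule1; congr (_ * _)%E.
Qed.

Lemma Emain N : forall m J A, (1 <= m)%N -> uniq J ->
  (forall j, j \in J -> (1 <= j)%N && (j < m)%N) ->
  (forall j, j \in J -> measurable (A j)) ->
  P (cyl J A `&` E m N) = (P (cyl J A) * ((1 - q) ^+ N)%:E)%E.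
Proof.
elim: N => [|N IH] m J A m1 u hJ hA.
  by rewrite /= setIT mule1.
have hJm : forall j, j \in J -> (j < m)%N by move=> j /hJ /andP [].
have hJ1 : forall j, j \in J -> (1 <= j)%N by move=> j /hJ /andP [].
have mC : measurable (cyl J A) by apply: cyl_meas.
have -> : cyl J A `&` E m N.+1 = (cyl J A `&` E m.+3 N) `\` G m.
  by rewrite /= setDE setIA setIAC.
rewrite measureD; first last.
- exact: (le_lt_trans (probability_le1 _ (measurableI _ _ mC (E_meas _ _))) (ltry _)).
- exact: G_meas.
- exact: measurableI mC (E_meas _ _).
have -> : cyl J A `&` E m.+3 N `&` G m = cyl (J ++ [:: m; m.+1; m.+2]) (Aext A m) `&` E m.+3 N.
  by rewrite -cylG // setIAC.
have hJ' : forall j, j \in J ++ [:: m; m.+1; m.+2] -> (1 <= j)%N && (j < m.+3)%N.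
  move=> j; rewrite mem_cat => /orP [/hJ /andP [a b]|]; first by rewrite a /=; lia.
  by rewrite !inE => /or3P [] /eqP ->; lia.
have hA' : forall j, j \in J ++ [:: m; m.+1; m.+2] -> measurable (Aext A m j).
  move=> j; rewrite mem_cat => /orP [hj|].
    by rewrite Aext_lt ?hJm //; apply: hA.
  by rewrite !inE => /or3P [] /eqP ->; rewrite ?Aext0 ?Aext1 ?Aext2.
have u' : uniq (J ++ [:: m; m.+1; m.+2]).
  rewrite cat_uniq u andTb; apply/andP; split.
    apply/hasPn => j /=; rewrite !inE => /or3P [] /eqP ->; apply/negP => /hJm; lia.
  rewrite /= !inE; lia.
transitivity (P (cyl J A `&` E m.+3 N) - P (cyl (J ++ [:: m; m.+1; m.+2]) (Aext A m) `&` E m.+3 N))%E; first by [].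
rewrite (IH m.+3 J A) //; last by move=> j /hJ; lia.
rewrite (IH m.+3 _ (Aext A m)) //.
rewrite -cylG // PcylG //.
rewrite -(fineK (Pfin _ mC)) -!EFinM -EFinB; congr EFin.
by rewrite exprS; ring.
Qed.

End Prob.
Arguments E {d T R P} xi m N.
Arguments cyl {d T R P} xi J A.
Arguments q {R} p.

Lemma geo0 (R : realType) (r a : R) : 0 <= r -> r < 1 -> 0 <= a ->
  (forall N, a <= r ^+ N) -> a = 0.
Proof.
move=> r0 r1 a0 hN.
set s := 1 - r.
have s0 : 0 < s by rewrite /s; lra.
have bern : forall N, r ^+ N * (1 + N%:R * s) <= 1.
  elim=> [|N IH]; first by rewrite expr0 mul0r addr0 mulr1.
  have hrN : r ^+ N.+1 <= 1 by rewrite exprn_ile1 // ltW.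
  have hrN0 : 0 <= r ^+ N by rewrite exprn_ge0.
  have e : r ^+ N.+1 * (1 + N.+1%:R * s) = r * (r ^+ N * (1 + N%:R * s)) + r ^+ N.+1 * s.
    by rewrite exprS -natr1; ring.
  rewrite e.
  have : r * (r ^+ N * (1 + N%:R * s)) <= r by rewrite ler_piMr.
  have : r ^+ N.+1 * s <= s by rewrite ler_piMl // ltW.
  rewrite /s; lra.
apply/eqP; rewrite eq_le a0 andbT; rewrite leNgt; apply/negP => apos.
set N := (Num.truncn (1 / (a * s))).+1.
have hN' : 1 / (a * s) < N%:R by apply: truncnS_gt.
have h1 : 1 < a * s * N%:R.
  have as0 : 0 < a * s by rewrite mulr_gt0.
  have ht : a * s * (1 / (a * s)) = 1 by rewrite mul1r mulfV // gt_eqF.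
  have hp : 0 < a * s * (N%:R - 1 / (a * s)) by rewrite mulr_gt0 // subr_gt0.
  move: hp; rewrite mulrBr ht; lra.
have := bern N; have := hN N.
have hNs : 0 <= 1 + N%:R * s by rewrite addr_ge0 // mulr_ge0 // ltW.
move=> haN hb.
have : a * (1 + N%:R * s) <= 1.
  by apply: le_trans hb; rewrite ler_wpM2r.
nra.
Qed.

Theorem lemma2p1 (d : measure_display) (T : measurableType d) (R : realType)
  (P : probability T R) (p x : R) (xi : nat -> {RV P >-> R}) :
  0 < p < 1 -> 1 <= x ->
  mutually_independent_RV P [set n | (1 <= n)%N] xi ->
  (forall n, (1 <= n)%N -> P (xi n @^-1` [set 1]) = p%:E) ->
  (forall n, (1 <= n)%N -> P (xi n @^-1` [set -1]) = (1 - p)%:E) ->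
  \forall w \ae P,
    (exists k : nat, Ys x (fun n => xi n w) k <= 2) ->
    exists n : nat, Ws x (fun n => xi n w) n <= 0.
Proof.
move=> /andP [p0 p1] x1 hind h1 hm1.
rewrite /prop_near1 /nbhs /= /almost_everywhere.
have hneg : P.-negligible
  ((\bigcup_n (xi n.+1 @^-1` (~` ([set 1] `|` [set -1])))) `|`
   (\bigcup_k \bigcap_N E xi k.+1 N)); last first.
  apply: (negligibleS _ hneg).
  move=> w /= hw.
  have [hk hW] : (exists k, Ys x (fun n => xi n w) k <= 2) /\
      (forall n, 0 < Ws x (fun n => xi n w) n).
    split.
      apply: contrapT => hno; apply: hw => hk; exfalso; exact: hno hk.
    move=> n; rewrite ltNge; apply/negP => hn; apply: hw => _; by exists n.
  case: (pselect (exists n, ~ (xi n.+1 w = 1 \/ xi n.+1 w = -1))) => [[n hn]|hgood].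
    by left; exists n.
  right; case: hk => k hk; exists k => //.
  have he : forall n, xi n.+1 w = 1 \/ xi n.+1 w = -1.
    by move=> n; apply: contrapT => h; apply: hgood; exists n.
  suff hs : forall N m, (k < m)%N -> E xi m N w by move=> N _; apply: hs.
  elim=> [|N' IH] m hm //=.
  split; last by apply: IH; lia.
  case: m hm => // m hm [[g1 g2] g3].
  have hY := @Ys_inv R x (fun n => xi n w) k he hk m hm.
  have := @pattern_bust R x (fun n => xi n w) m hY g1 g2 g3.
  by rewrite leNgt hW.
apply: negligibleU.
- apply: negligible_bigcup => n.
  exists (xi n.+1 @^-1` (~` ([set 1] `|` [set -1]))); split => //.
    by apply: measurable_funPTI; apply: measurableC; apply: measurableU; apply: measurable_set1.
  have hz : P (xi n.+1 @^-1` (~` ([set 1] `|` [set -1]))) = 0; last exact: hz.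
  rewrite -preimage_setC probability_setC; last first.
    by apply: measurable_funPTI; apply: measurableU; apply: measurable_set1.
  have m1 : measurable (xi n.+1 @^-1` [set 1]).
    by apply: measurable_funPTI; apply: measurable_set1.
  have m2 : measurable (xi n.+1 @^-1` [set -1]).
    by apply: measurable_funPTI; apply: measurable_set1.
  have hU : P (xi n.+1 @^-1` [set 1] `|` xi n.+1 @^-1` [set -1]) =
     (P (xi n.+1 @^-1` [set 1%R]) + P (xi n.+1 @^-1` [set (-1)%R]))%E.
    apply: measureU => //.
    apply/seteqP; split => w //= [a b]; move: a b => ->; lra.
  rewrite preimage_setU hU h1 // hm1 // -EFinD.
  by have -> : 1 - (p + (1 - p)) = 0 by ring.
- apply: negligible_bigcup => k.
  exists (\bigcap_N E xi k.+1 N); split => //.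
    by apply: bigcapT_measurable => N; apply: E_meas.
  set S := \bigcap_N E xi k.+1 N.
  have mS : measurable S by apply: bigcapT_measurable => N; apply: E_meas.
  have hz : P S = 0; last exact: hz.
  have hq0 : 0 < q p by rewrite /q mulr_gt0 // exprn_gt0 // subr_gt0.
  have hq1 : q p < 1.
    rewrite /q; have h1p : (1 - p) ^+ 2 < 1 by rewrite expr2; nra.
    nra.
  have hle : forall N, (P S <= ((1 - q p) ^+ N)%:E)%E.
    move=> N.
    have hE := @Emain d T R P p xi hind h1 hm1 N k.+1 [::] (fun=> setT) isT isT
       (fun j (hj : j \in [::]) => ltac:(by rewrite in_nil in hj))
       (fun j (hj : j \in [::]) => ltac:(by rewrite in_nil in hj)).
    have c0 : cyl xi [::] (fun=> setT) = setT.
      by apply/seteqP; split => // w _ j /=; rewrite in_nil.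
    move: hE; rewrite c0 setTI probability_setT mul1e => <-.
    apply: le_measure; rewrite ?inE //; first exact: E_meas.
    exact: bigcap_inf.
  have fS := @Pfin _ _ _ P _ mS.
  rewrite -(fineK fS); congr EFin.
  apply: (@geo0 R (1 - q p)); [lra|lra| |].
    by rewrite fine_ge0 // measure_ge0.
  by move=> N; rewrite -lee_fin fineK // hle.
Qed.
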